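(* Let $\mathbf{A}\in\mathbb{R}^{M\times N}$, $\mathbf{Y}\in\mathbb{R}^{M\times L}$, and let $\mathcal{S}_K=\{s_1<s_2<\dots<s_K\}\subseteq[N]$ with $K=|\mathcal{S}_K|\le N$. Let $\bar{\mathbf{A}}\in\mathbb{R}^{M\times K}$ be the submatrix of $\mathbf{A}$ consisting of the columns indexed by $\mathcal{S}_K$ (in this order). Let $(\bar{\mathbf{g}}(t),\bar{\mathbf{V}}(t))\in\mathbb{R}^K\times\mathbb{R}^{K\times L}$ follow the gradient flow of $\mathcal{L}_K(\bar{\mathbf{g}},\bar{\mathbf{V}})=\Vert\mathbf{Y}-\bar{\mathbf{A}}((\bar{\mathbf{g}}^{\odot2}\mathbf{1}_L)\odot\bar{\mathbf{V}})\Vert_F^2$. Define $\tilde{\mathbf{g}}(t)\in\mathbb{R}^N$ and $\tilde{\mathbf{V}}(t)\in\mathbb{R}^{N\times L}$ by $\tilde g_i(t)=\bar g_k(t)$ and $\tilde V_{il}(t)=\bar V_{kl}(t)$ if $i=s_k$ for some $k\in[K]$, and $\tilde g_i(t)=0$, $\tilde V_{il}(t)=0$ if $i\notin\mathcal{S}_K$. Then $(\tilde{\mathbf{g}}(t),\tilde{\mathbf{V}}(t))$ follows the gradient flow of $\mathcal{L}_N(\tilde{\mathbf{g}},\tilde{\mathbf{V}})=\Vert\mathbf{Y}-\mathbf{A}((\tilde{\mathbf{g}}^{\odot2}\mathbf{1}_L)\odot\tilde{\mathbf{V}})\Vert_F^2$, i.e., $$\frac{d}{dt}\tilde g_i(t)=-\frac{\partial\mathcal{L}_N}{\partial\tilde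 g_i}(\tilde{\mathbf g}(t),\tilde{\mathbf V}(t)),\qquad \frac{d}{dt}\tilde V_{il}(t)=-\frac{\partial\mathcal{L}_N}{\partial\tilde V_{il}}(\tilde{\mathbf g}(t),\tilde{\mathbf V}(t))$$ for all $i\in[N]$, $l\in[L]$.
   Context: $\odot$ is the entrywise product, $\mathbf{g}^{\odot2}$ the entrywise square, $\mathbf{1}_L$ the $1\times L$ all-ones row vector, so $((\mathbf g^{\odot 2}\mathbf 1_L)\odot\mathbf V)_{ij}=g_i^2V_{ij}$. Gradient flow of a loss $f$ means each coordinate's time derivative equals minus the corresponding partial derivative of $f$ along the curve. *)

(* Defs.v *)
From HB Require Import structures.
From mathcomp Require Import all_boot all_order all_algebra.
From mathcomp Require Import all_classical all_reals all_analysis.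
Set Implicit Arguments. Unset Strict Implicit. Unset Printing Implicit Defensive.
Import Order.TTheory GRing.Theory Num.Theory.
Local Open Scope ring_scope.

Definition frob2 {R : realType} {m n : nat} (X : 'M[R]_(m, n)) : R :=
  \sum_(i < m) \sum_(j < n) X i j ^+ 2.

Definition gsqV {R : realType} {n L : nat} (g : 'cV[R]_n) (V : 'M[R]_(n, L))
  : 'M[R]_(n, L) := \matrix_(i, l) (g i ord0 ^+ 2 * V i l).

Definition lossGV {R : realType} {M n L : nat} (A : 'M[R]_(M, n))
  (Y : 'M[R]_(M, L)) (g : 'cV[R]_n) (V : 'M[R]_(n, L)) : R :=
  frob2 (Y - A *m gsqV g V).

Definition setc {R : realType} {n : nat} (g : 'cV[R]_n) (i : 'I_n) (x : R)
  : 'cV[R]_n := \col_j (if j == i then x else g j ord0).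
Definition setm {R : realType} {n L : nat} (V : 'M[R]_(n, L)) (i : 'I_n)
  (l : 'I_L) (x : R) : 'M[R]_(n, L) :=
  \matrix_(j, k) (if (j == i) && (k == l) then x else V j k).

Definition grad_flow {R : realType} {n L : nat}
  (f : 'cV[R]_n -> 'M[R]_(n, L) -> R)
  (g : R -> 'cV[R]_n) (V : R -> 'M[R]_(n, L)) : Prop :=
  forall t : R,
    (forall i : 'I_n, exists d : R,
        is_derive (g t i ord0) 1 (fun x => f (setc (g t) i x) (V t)) d /\
        is_derive t 1 (fun s => g s i ord0) (- d)) /\
    (forall (i : 'I_n) (l : 'I_L), exists d : R,
        is_derive (V t i l) 1 (fun x => f (g t) (setm (V t) i l x)) d /\
        is_derive t 1 (fun s => V s i l) (- d)).

Definition embed_col {R : realType} {K N : nat} (s : 'I_K -> 'I_N)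
  (gb : 'cV[R]_K) : 'cV[R]_N :=
  \col_i (match [pick k | s k == i] with Some k => gb k ord0 | None => 0 end).
Definition embed_mx {R : realType} {K N L : nat} (s : 'I_K -> 'I_N)
  (Vb : 'M[R]_(K, L)) : 'M[R]_(N, L) :=
  \matrix_(i, l) (match [pick k | s k == i] with Some k => Vb k l | None => 0 end).

(* Main.v *)
Require Import Defs.
From HB Require Import structures.
From mathcomp Require Import all_boot all_order all_algebra.
From mathcomp Require Import all_classical all_reals all_analysis.
Import Order.TTheory GRing.Theory Num.Theory.
Local Open Scope ring_scope.

Lemma inj_of_mono (K N : nat) (s : 'I_K -> 'I_N)
  (hs : forall k1 k2 : 'I_K, (k1 < k2)%N -> (s k1 < s k2)%N) : injective s.
Proof.
move=> k1 k2 e; apply/eqP; case: (ltngtP k1 k2) => [h|h|h].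
- by have := hs _ _ h; rewrite e ltnn.
- by have := hs _ _ h; rewrite e ltnn.
- by apply/eqP; apply: val_inj.
Qed.

Lemma pick_s (K N : nat) (s : 'I_K -> 'I_N) (inj : injective s) (k : 'I_K) :
  [pick k' | s k' == s k] = Some k.
Proof.
case: pickP => [k' /eqP/inj -> //|/(_ k)]; by rewrite eqxx.
Qed.

Lemma loss_embed (R : realType) (M N L K : nat)
  (A : 'M[R]_(M, N)) (Y : 'M[R]_(M, L)) (s : 'I_K -> 'I_N) (inj : injective s)
  (g : 'cV[R]_K) (V : 'M[R]_(K, L)) :
  lossGV A Y (embed_col s g) (embed_mx s V) = lossGV (colsub s A) Y g V.
Proof.
rewrite /lossGV; congr frob2; congr (_ - _).
apply/matrixP => a l; rewrite !mxE.
pose G (k : 'I_K) := A a (s k) * (g k ord0 ^+ 2 * V k l).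
transitivity (\sum_(i < N) \sum_(k < K | s k == i) G k).
  apply: eq_bigr => i _; rewrite !mxE.
  case: pickP => [k /eqP ek|nk].
    rewrite (big_pred1 k) /G ?ek // => k'.
    by apply/idP/idP => /eqP e; apply/eqP; [apply: inj; rewrite e ek | rewrite e ek].
  by rewrite big_pred0 // !mulr0.
rewrite (exchange_big_dep xpredT) //=; apply: eq_bigr => k _.
rewrite (big_pred1 (s k)) => [|i]; first by rewrite /G !mxE.
by rewrite /= eq_sym.
Qed.

Lemma setc_const (R : realType) (M N L : nat)
  (A : 'M[R]_(M, N)) (Y : 'M[R]_(M, L)) (g : 'cV[R]_N) (V : 'M[R]_(N, L))
  (i : 'I_N) (x : R) : (forall l, V i l = 0) ->
  lossGV A Y (setc g i x) V = lossGV A Y g V.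
Proof.
move=> h; rewrite /lossGV; congr (frob2 (_ - A *m _)).
apply/matrixP => j l; rewrite !mxE.
by case: eqP => // ->; rewrite h !mulr0.
Qed.

Lemma setm_const (R : realType) (M N L : nat)
  (A : 'M[R]_(M, N)) (Y : 'M[R]_(M, L)) (g : 'cV[R]_N) (V : 'M[R]_(N, L))
  (i : 'I_N) (l : 'I_L) (x : R) : g i ord0 = 0 ->
  lossGV A Y g (setm V i l x) = lossGV A Y g V.
Proof.
move=> h; rewrite /lossGV; congr (frob2 (_ - A *m _)).
apply/matrixP => j l'; rewrite !mxE.
case: eqP => //= -> ; case: eqP => // _.
by rewrite h expr0n /= !mul0r.
Qed.

Theorem lemmaC1 (R : realType) (M N L K : nat)
  (A : 'M[R]_(M, N)) (Y : 'M[R]_(M, L))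
  (s : 'I_K -> 'I_N) (hs : forall k1 k2 : 'I_K, (k1 < k2)%N -> (s k1 < s k2)%N)
  (gb : R -> 'cV[R]_K) (Vb : R -> 'M[R]_(K, L)) :
  grad_flow (lossGV (colsub s A) Y) gb Vb ->
  grad_flow (lossGV A Y) (fun t => embed_col s (gb t)) (fun t => embed_mx s (Vb t)).
Proof.
have inj : injective s := @inj_of_mono K N s hs.
move=> H t; have [Hg HV] := H t; split.
- move=> i; case: (pickP (fun k => s k == i)) => [k /eqP <-|nk].
    have [d [d1 d2]] := Hg k; exists d; split.
      rewrite mxE (@pick_s _ _ s inj).
      have -> : (fun x => lossGV A Y (setc (embed_col s (gb t)) (s k) x)
                   (embed_mx s (Vb t))) =
                (fun x => lossGV (colsub s A) Y (setc (gb t) k x) (Vb t)).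
        apply: funext => x; rewrite -(@loss_embed R M N L K A Y s inj).
        have -> : setc (embed_col s (gb t)) (s k) x = embed_col s (setc (gb t) k x); last by [].
        apply/matrixP => i' j; rewrite !mxE.
        case: pickP => [k' /eqP <-|nk'].
          by rewrite (inj_eq inj) !mxE.
        case: eqP => [e|_]; last by [].
        by move: (nk' k); rewrite e eqxx.
      exact: d1.
    have -> : (fun s0 => embed_col s (gb s0) (s k) ord0) = (fun s0 => gb s0 k ord0).
      by apply: funext => s0; rewrite mxE (@pick_s _ _ s inj).
    exact: d2.
  exists 0; split.
    have -> : (fun x => lossGV A Y (setc (embed_col s (gb t)) i x)
                   (embed_mx s (Vb t))) =
              cst (lossGV A Y (embed_col s (gb t)) (embed_mx s (Vb t))).
      apply: funext => x; apply: setc_const => l.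
      by rewrite mxE; case: pickP => // k; rewrite nk.
    exact: is_derive_cst.
  have -> : (fun s0 => embed_col s (gb s0) i ord0) = cst 0.
    apply: funext => s0; rewrite mxE; case: pickP => // k; by rewrite nk.
  rewrite oppr0; exact: is_derive_cst.
- move=> i l; case: (pickP (fun k => s k == i)) => [k /eqP <-|nk].
    have [d [d1 d2]] := HV k l; exists d; split.
      rewrite mxE (@pick_s _ _ s inj).
      have -> : (fun x => lossGV A Y (embed_col s (gb t))
                   (setm (embed_mx s (Vb t)) (s k) l x)) =
                (fun x => lossGV (colsub s A) Y (gb t) (setm (Vb t) k l x)).
        apply: funext => x; rewrite -(@loss_embed R M N L K A Y s inj).
        have -> : setm (embed_mx s (Vb t)) (s k) l x = embed_mx s (setm (Vb t) k l x); last by [].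
        apply/matrixP => i' j; rewrite !mxE.
        case: pickP => [k' /eqP <-|nk'].
          by rewrite (inj_eq inj) !mxE.
        case: eqP => [e|_]; last by [].
        by move: (nk' k); rewrite e eqxx.
      exact: d1.
    have -> : (fun s0 => embed_mx s (Vb s0) (s k) l) = (fun s0 => Vb s0 k l).
      by apply: funext => s0; rewrite mxE (@pick_s _ _ s inj).
    exact: d2.
  exists 0; split.
    have -> : (fun x => lossGV A Y (embed_col s (gb t))
                   (setm (embed_mx s (Vb t)) i l x)) =
              cst (lossGV A Y (embed_col s (gb t)) (embed_mx s (Vb t))).
      apply: funext => x; apply: setm_const.
      by rewrite mxE; case: pickP => // k; rewrite nk.
    exact: is_derive_cst.
  have -> : (fun s0 => embed_mx s (Vb s0) i l) = cst 0.
    apply: funext => s0; rewrite mxE; case: pickP => // k; by rewrite nk.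
  rewrite oppr0; exact: is_derive_cst.
Qed.
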